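(* For $(x,a)\in\mathbb{R}\times\mathbb{R}_+$ define the operator $\widehat R_{\mathrm{Aff}}(x,a)$ on $\mathcal{S}(\mathbb{R}_+)$ by \[\widehat R_{\mathrm{Aff}}(x,a)\psi(r):=\frac{e^{2\pi i x v}\,v\,(1-e^{v})}{1+v-e^{v}}\,\psi\big(re^{-v}\big),\qquad v:=\lambda^{-1}\!\Big(\frac ra\Big),\ r>0\] (with the prefactor interpreted as its limit $2$ when $v=0$). Then for all $\psi,\phi\in\mathcal{S}(\mathbb{R}_+)$ and $(x,a)\in\mathbb{R}\times\mathbb{R}_+$, \[W_{\mathrm{Aff}}^{\psi,\phi}(x,a)=\big\langle\widehat R_{\mathrm{Aff}}(x,a)\psi,\phi\big\rangle_{L^2(\mathbb{R}_+)}.\]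
   Context: $L^2(\mathbb{R}_+)$ denotes $L^2(\mathbb{R}_+, a^{-1}\,da)$ with inner product $\langle\psi,\phi\rangle=\int_0^\infty\psi\overline\phi\,\frac{da}{a}$. $\mathcal{S}(\mathbb{R}_+)$ is the space of smooth $\psi:\mathbb{R}_+\to\mathbb{C}$ with $x\mapsto\psi(e^x)$ in $\mathcal{S}(\mathbb{R})$. $\lambda(u) := \frac{ue^u}{e^u-1}$ for $u\neq 0$, $\lambda(0):=1$; $\lambda$ is an increasing bijection $\mathbb{R}\to(0,\infty)$ with inverse $\lambda^{-1}$. Affine cross-Wigner transform: $W_{\mathrm{Aff}}^{\psi,\phi}(x,a) := \int_{-\infty}^{\infty}\psi(a\lambda(u))\overline{\phi(a\lambda(-u))}e^{-2\pi i x u}\,du$. *)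

(* Defs.v *)
From Stdlib Require Import Reals Lra ClassicalEpsilon.
Open Scope R_scope.

Definition Cx : Type := (R * R)%type.
Definition Cmul (z w : Cx) : Cx :=
  (fst z * fst w - snd z * snd w, fst z * snd w + snd z * fst w).
Definition Cconj (z : Cx) : Cx := (fst z, - snd z).
Definition Cscale (r : R) (z : Cx) : Cx := (r * fst z, r * snd z).
Definition Cexpi (t : R) : Cx := (cos t, sin t).

Definition Schwartz_R (g : R -> R) : Prop :=
  exists D : nat -> R -> R,
    (forall x, D 0%nat x = g x) /\
    (forall (n : nat) (x : R), derivable_pt_lim (D n) x (D (S n) x)) /\
    (forall k n : nat, exists M : R, forall x : R, Rabs (x ^ k * D n x) <= M).

(* S(R_+): psi : R_+ -> C (only values at positive reals matter),
   with x |-> psi (e^x) in S(R) (real and imaginary parts). *)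
Definition Schwartz_Rplus (psi : R -> Cx) : Prop :=
  Schwartz_R (fun x => fst (psi (exp x))) /\
  Schwartz_R (fun x => snd (psi (exp x))).

Definition lambda (u : R) : R :=
  if Req_EM_T u 0 then 1 else u * exp u / (exp u - 1).

(* inverse of lambda : R -> (0,oo) (meaningful for y > 0) *)
Definition lambda_inv (y : R) : R :=
  epsilon (inhabits 0) (fun u => lambda u = y).

Definition improper_int_R (f : R -> R) (L : R) : Prop :=
  (forall a b, a <= b -> inhabited (Riemann_integrable f a b)) /\
  (forall eps, 0 < eps -> exists M, 0 < M /\
     forall a b (pr : Riemann_integrable f a b),
       a <= - M -> M <= b -> Rabs (RiemannInt pr - L) < eps).

Definition improper_int_pos (f : R -> R) (L : R) : Prop :=
  (forall a b, 0 < a -> a <= b -> inhabited (Riemann_integrable f a b)) /\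
  (forall eps, 0 < eps -> exists d M, 0 < d /\ d < M /\
     forall a b (pr : Riemann_integrable f a b),
       0 < a -> a <= d -> M <= b -> Rabs (RiemannInt pr - L) < eps).

Definition Cimproper_int_R (f : R -> Cx) (L : Cx) : Prop :=
  improper_int_R (fun u => fst (f u)) (fst L) /\
  improper_int_R (fun u => snd (f u)) (snd L).

Definition Cimproper_int_pos (f : R -> Cx) (L : Cx) : Prop :=
  improper_int_pos (fun u => fst (f u)) (fst L) /\
  improper_int_pos (fun u => snd (f u)) (snd L).

Definition W_Aff_integrand (psi phi : R -> Cx) (x a : R) (u : R) : Cx :=
  Cmul (Cmul (psi (a * lambda u)) (Cconj (phi (a * lambda (- u)))))
       (Cexpi (- (2 * PI * x * u))).

Definition W_Aff_is (psi phi : R -> Cx) (x a : R) (L : Cx) : Prop :=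
  Cimproper_int_R (W_Aff_integrand psi phi x a) L.

Definition R_prefactor (v : R) : R :=
  if Req_EM_T v 0 then 2 else v * (1 - exp v) / (1 + v - exp v).

Definition R_Aff (x a : R) (psi : R -> Cx) (r : R) : Cx :=
  let v := lambda_inv (r / a) in
  Cscale (R_prefactor v) (Cmul (Cexpi (2 * PI * x * v)) (psi (r * exp (- v)))).

(* <f, g>_{L^2(R_+, da/a)} = L *)
Definition L2Rplus_inner_is (f g : R -> Cx) (L : Cx) : Prop :=
  Cimproper_int_pos (fun r => Cscale (/ r) (Cmul (f r) (Cconj (g r)))) L.

(* Main.v *)
Require Import Defs.
From Stdlib Require Import Reals Lra Psatz ClassicalEpsilon.
From Coquelicot Require Import Coquelicot.
Open Scope R_scope.

Definition ec (n : nat) : R := / INR (Factorial.fact n).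
Definition hc (n : nat) : R := / INR (Factorial.fact (S n)).
Definition hh (u : R) : R := PSeries hc u.
Definition dh (u : R) : R := PSeries (PS_derive hc) u.

Lemma ec_radius : CV_radius ec = p_infty.
Proof.
  destruct (CV_radius ec) eqn:E; try reflexivity.
  - exfalso.
    assert (H1 : Rbar_lt (CV_radius ec) (Rabs (Rabs r + 1))).
    { rewrite E. simpl. rewrite (Rabs_pos_eq (Rabs r + 1)); [|pose proof (Rabs_pos r); lra].
      pose proof (Rle_abs r); lra. }
    apply (CV_disk_outside _ _ H1).
    apply ex_series_lim_0.
    exists (exp (Rabs r + 1)). apply is_pseries_R. apply (is_exp_Reals (Rabs r + 1)).
  - exfalso. pose proof (CV_radius_ge_0 ec) as H. rewrite E in H. exact H.
Qed.

Lemma hc_radius : CV_radius hc = p_infty.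
Proof.
  rewrite <- ec_radius, <- (CV_radius_decr_1 ec). apply CV_radius_ext. intro n. reflexivity.
Qed.

Lemma dhc_radius : CV_radius (PS_derive hc) = p_infty.
Proof. rewrite CV_radius_derive. apply hc_radius. Qed.

Lemma hh_derive : forall u, is_derive hh u (dh u).
Proof. intro u. apply is_derive_PSeries. rewrite hc_radius. exact I. Qed.

Lemma dh_derive : forall u, is_derive dh u (PSeries (PS_derive (PS_derive hc)) u).
Proof. intro u. apply is_derive_PSeries. rewrite dhc_radius. exact I. Qed.

Lemma hh_cont : forall u, continuity_pt hh u.
Proof. intro u. apply PSeries_continuity. rewrite hc_radius. exact I. Qed.

Lemma dh_cont : forall u, continuity_pt dh u.
Proof. intro u. apply PSeries_continuity. rewrite dhc_radius. exact I. Qed.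

Lemma exp_hh : forall u, exp u = 1 + u * hh u.
Proof.
  intro u. rewrite exp_Reals. rewrite PSeries_decr_1.
  - unfold hh. f_equal. unfold ec. simpl. lra.
  - exists (exp u). apply is_exp_Reals.
Qed.

Lemma hh_0 : hh 0 = 1.
Proof. unfold hh. rewrite PSeries_0. unfold hc. simpl. lra. Qed.

Lemma dh_0 : dh 0 = / 2.
Proof. unfold dh. rewrite PSeries_0. unfold PS_derive, hc. simpl. field. Qed.

Lemma u_hh : forall u, u * hh u = exp u - 1.
Proof. intro u. rewrite (exp_hh u). ring. Qed.

Lemma hh_pos : forall u, 0 < hh u.
Proof.
  intro u. pose proof (u_hh u) as H.
  destruct (Req_EM_T u 0) as [->|Hu]. { rewrite hh_0; lra. }
  pose proof (exp_ineq1 u Hu).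
  destruct (Rlt_or_le u 0) as [Hn|Hp].
  - assert (exp u < 1). { rewrite <- exp_0. apply exp_increasing. lra. }
    destruct (Rle_or_lt (hh u) 0); [|lra]. nra.
  - destruct (Rle_or_lt (hh u) 0); [|lra]. nra.
Qed.

Lemma hh_opp : forall u, hh (- u) = exp (- u) * hh u.
Proof.
  intro u. destruct (Req_EM_T u 0) as [->|Hu].
  - rewrite Ropp_0, exp_0; ring.
  - pose proof (u_hh u) as H1. pose proof (u_hh (-u)) as H2.
    assert (E : exp (-u) * exp u = 1) by (rewrite <- exp_plus; replace (-u+u) with 0 by ring; apply exp_0).
    apply (Rmult_eq_reg_l u); [|exact Hu].
    replace (u * hh (-u)) with (- (-u * hh (-u))) by ring. rewrite H2.
    replace (u * (exp (- u) * hh u)) with (exp (-u) * (u * hh u)) by ring. rewrite H1.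
    nra.
Qed.

Lemma lambda_eq : forall u, lambda u = exp u / hh u.
Proof.
  intro u. unfold lambda. destruct (Req_EM_T u 0) as [->|Hu].
  - rewrite exp_0, hh_0. field.
  - pose proof (u_hh u) as H. pose proof (hh_pos u).
    assert (exp u - 1 <> 0) by (rewrite <- H; apply Rmult_integral_contrapositive; split; lra).
    rewrite <- H. field. split; lra.
Qed.

Lemma lambda_eq2 : forall u, lambda u = / hh (- u).
Proof.
  intro u. rewrite lambda_eq, hh_opp. pose proof (hh_pos u).
  assert (E : exp (-u) * exp u = 1) by (rewrite <- exp_plus; replace (-u+u) with 0 by ring; apply exp_0).
  assert (exp u > 0) by apply exp_pos.
  assert (exp (-u) > 0) by apply exp_pos.
  replace (exp u) with (/ exp (-u)) by (field_simplify_eq; lra).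
  field. split; lra.
Qed.

Lemma lambda_pos : forall u, 0 < lambda u.
Proof. intro u. rewrite lambda_eq2. apply Rinv_0_lt_compat, hh_pos. Qed.

Lemma u_dh : forall u, hh u + u * dh u = exp u.
Proof.
  intro u.
  assert (H1 : is_derive (fun t => t * hh t) u (1 * hh u + u * dh u)).
  { apply is_derive_Reals. apply (derivable_pt_lim_mult id hh). apply derivable_pt_lim_id.
    apply is_derive_Reals, hh_derive. }
  assert (H2 : is_derive (fun t => t * hh t) u (exp u)).
  { apply (is_derive_ext (fun t => exp t - 1)). intro t. rewrite u_hh. reflexivity.
    auto_derive; auto. ring. }
  apply is_derive_unique in H1. apply is_derive_unique in H2. rewrite H1 in H2. lra.
Qed.

Lemma hh_dh_pos : forall u, 0 < hh u - dh u.
Proof.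
  intro u. destruct (Req_EM_T u 0) as [->|Hu].
  - rewrite hh_0, dh_0. lra.
  - pose proof (u_hh u) as H1. pose proof (u_dh u) as H2. pose proof (exp_ineq1 u Hu).
    assert (E : u * u * (hh u - dh u) = exp u - 1 - u).
    { replace (u * u * (hh u - dh u)) with (u * (u * hh u) + u * hh u - u * (hh u + u * dh u)) by ring.
      rewrite H1, H2. ring. }
    assert (0 < u * u) by (apply Rsqr_pos_lt; exact Hu).
    destruct (Rle_or_lt (hh u - dh u) 0); [|lra]. nra.
Qed.

Definition dlam (u : R) : R := exp u * (hh u - dh u) / (hh u) ^ 2.

Lemma lambda_derive : forall u, is_derive lambda u (dlam u).
Proof.
  intro u. apply (is_derive_ext (fun t => exp t / hh t)). { intro t; rewrite lambda_eq; reflexivity. }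
  pose proof (hh_pos u).
  eapply is_derive_ext; [intro; reflexivity|].
  replace (dlam u) with ((exp u * hh u - exp u * dh u) / hh u ^ 2).
  - apply is_derive_div. apply is_derive_exp. apply hh_derive. lra.
  - unfold dlam. field. lra.
Qed.

Lemma dlam_pos : forall u, 0 < dlam u.
Proof.
  intro u. unfold dlam. pose proof (hh_pos u). pose proof (hh_dh_pos u). pose proof (exp_pos u).
  apply Rdiv_lt_0_compat. apply Rmult_lt_0_compat; lra. apply pow_lt; lra.
Qed.

Lemma dlam_cont : forall u, continuity_pt dlam u.
Proof.
  intro u. unfold dlam. pose proof (hh_pos u).
  apply (continuity_pt_div (fun t => exp t * (hh t - dh t)) (fun t => hh t ^ 2)).
  - apply continuity_pt_mult. apply derivable_continuous_pt, derivable_pt_exp.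
    apply continuity_pt_minus. apply hh_cont. apply dh_cont.
  - apply (continuity_pt_mult hh (fun t => hh t ^ 1)). apply hh_cont.
    apply (continuity_pt_mult hh (fun t => 1)). apply hh_cont. apply continuity_pt_const. intros a b; reflexivity.
  - apply pow_nonzero. lra.
Qed.

Lemma prefactor_id : forall v, R_prefactor v * dlam v = lambda v.
Proof.
  intro v. rewrite lambda_eq. unfold R_prefactor, dlam.
  pose proof (hh_pos v) as P1. pose proof (hh_dh_pos v) as P2. pose proof (exp_pos v) as P3.
  destruct (Req_EM_T v 0) as [->|Hv].
  - rewrite hh_0, dh_0. field.
  - pose proof (u_hh v) as H1. pose proof (u_dh v) as H2. pose proof (exp_ineq1 v Hv).
    assert (E : v * v * (hh v - dh v) = exp v - 1 - v).
    { replace (v * v * (hh v - dh v)) with (v * (v * hh v) + v * hh v - v * (hh v + v * dh v)) by ring.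
      rewrite H1, H2. ring. }
    replace (1 + v - exp v) with (- (v * v * (hh v - dh v))) by lra.
    replace (1 - exp v) with (- (v * hh v)) by lra.
    field. repeat split; try lra. 
Qed.

Lemma lambda_cont : forall u, continuity_pt lambda u.
Proof. intro u. apply derivable_continuous_pt. exists (dlam u). apply is_derive_Reals, lambda_derive. Qed.

Lemma lambda_incr : forall x y, x < y -> lambda x < lambda y.
Proof.
  intros x y Hxy. apply (incr_function lambda m_infty p_infty dlam); simpl; auto.
  intros; apply lambda_derive. intros; apply dlam_pos.
Qed.

Lemma lambda_le : forall x y, x <= y -> lambda x <= lambda y.
Proof. intros x y H. destruct H. left; apply lambda_incr; auto. subst; lra. Qed.

Lemma lambda_inj : forall x y, lambda x = lambda y -> x = y.
Proof.
  intros x y H. destruct (Rtotal_order x y) as [h|[h|h]]; auto;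
  apply lambda_incr in h; lra.
Qed.

Lemma lambda_gt : forall v, v < lambda v.
Proof.
  intro v. destruct (Rle_or_lt v 0). pose proof (lambda_pos v); lra.
  rewrite lambda_eq. pose proof (hh_pos v). pose proof (u_hh v).
  apply (Rmult_lt_reg_r (hh v)); auto. unfold Rdiv. rewrite Rmult_assoc, Rinv_l; lra.
Qed.

Lemma exp_sq : forall w, (1 + w/2)^2 <= exp w \/ w < -2.
Proof.
  intro w. destruct (Rlt_or_le w (-2)); [right; auto|left].
  pose proof (exp_ineq1_le (w/2)).
  replace (exp w) with (exp (w/2) * exp (w/2)) by (rewrite <- exp_plus; f_equal; field).
  nra.
Qed.

Lemma lambda_small : forall w, 0 < w -> lambda (- w) <= 4 / w.
Proof.
  intros w Hw. rewrite lambda_eq2, Ropp_involutive. pose proof (hh_pos w). pose proof (u_hh w).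
  destruct (exp_sq w) as [h|h]; [|lra].
  assert (w / 4 <= hh w) by nra.
  apply Rle_trans with (/ (w/4)). apply Rinv_le_contravar; lra. right; field; lra.
Qed.

Lemma lambda_surj : forall y, 0 < y -> exists v, lambda v = y.
Proof.
  intros y Hy.
  assert (H1 : lambda (- (4 / y + 1)) < y).
  { assert (0 < 4 / y) by (apply Rdiv_lt_0_compat; lra).
    eapply Rle_lt_trans. apply lambda_small. lra.
    apply (Rmult_lt_reg_r (4/y+1)); [lra|]. unfold Rdiv. rewrite Rmult_assoc, Rinv_l; [|lra].
    field_simplify; try lra. }
  pose proof (lambda_gt y).
  destruct (IVT (fun t => lambda t - y) (- (4/y+1)) y) as [z [_ Hz]].
  - intro t. apply continuity_pt_minus. apply lambda_cont. apply continuity_pt_const. intros a b; auto.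
  - assert (0 < 4 / y) by (apply Rdiv_lt_0_compat; lra). lra.
  - lra.
  - lra.
  - exists z. lra.
Qed.

Lemma lambda_inv_spec : forall y, 0 < y -> lambda (lambda_inv y) = y.
Proof.
  intros y Hy. unfold lambda_inv. apply (epsilon_spec (inhabits 0) (fun u => lambda u = y)).
  apply lambda_surj; auto.
Qed.

Lemma lambda_inv_lambda : forall v, lambda_inv (lambda v) = v.
Proof. intro v. apply lambda_inj. apply lambda_inv_spec, lambda_pos. Qed.

Lemma lambda_inv_cont : forall y, 0 < y -> continuity_pt lambda_inv y.
Proof.
  intros y0 Hy0 eps Heps.
  set (v0 := lambda_inv y0).
  assert (E0 : lambda v0 = y0) by (apply lambda_inv_spec; auto).
  assert (A1 : lambda v0 < lambda (v0 + eps)) by (apply lambda_incr; lra).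
  assert (A2 : lambda (v0 - eps) < lambda v0) by (apply lambda_incr; lra).
  exists (Rmin y0 (Rmin (lambda (v0+eps) - y0) (y0 - lambda (v0 - eps)))).
  split. { repeat apply Rmin_pos; lra. }
  intros y [_ Hy]. unfold R_dist in *. simpl in *. unfold R_dist in *.
  pose proof (Rmin_l y0 (Rmin (lambda (v0+eps) - y0) (y0 - lambda (v0 - eps)))).
  pose proof (Rmin_r y0 (Rmin (lambda (v0+eps) - y0) (y0 - lambda (v0 - eps)))).
  pose proof (Rmin_l (lambda (v0+eps) - y0) (y0 - lambda (v0 - eps))).
  pose proof (Rmin_r (lambda (v0+eps) - y0) (y0 - lambda (v0 - eps))).
  apply Rabs_def2 in Hy. destruct Hy.
  assert (Hyp : 0 < y) by lra.
  pose proof (lambda_inv_spec y Hyp) as Ey.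
  apply Rabs_def1.
  - destruct (Rlt_or_le (lambda_inv y - v0) eps) as [h|h]; auto.
    assert (lambda (v0 + eps) <= lambda (lambda_inv y)) by (apply lambda_le; lra). lra.
  - destruct (Rlt_or_le (-eps) (lambda_inv y - v0)) as [h|h]; auto.
    assert (lambda (lambda_inv y) <= lambda (v0 - eps)) by (apply lambda_le; lra). lra.
Qed.

Lemma cpt_c : forall f x, continuity_pt f x -> continuous f x.
Proof. intros f x H. apply continuity_pt_filterlim. exact H. Qed.

Lemma exRI : forall f a b, (forall x, continuity_pt f x) -> ex_RInt f a b.
Proof. intros f a b H. apply (@ex_RInt_continuous R_CompleteNormedModule). intros; apply cpt_c, H. Qed.

Lemma big_nat : forall K, exists N : nat, K < INR N.
Proof.
  intro K. destruct (nfloor_ex (Rabs K) (Rabs_pos K)) as [n Hn].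
  exists (S n). rewrite S_INR. pose proof (Rle_abs K). lra.
Qed.

Lemma RInt_invsq : forall C p q, 0 < p -> p <= q ->
  RInt (fun u => C / u ^ 2) p q = C / p - C / q.
Proof.
  intros C p q Hp Hpq. apply is_RInt_unique.
  replace (C / p - C / q) with (minus ((fun u => - C / u) q) ((fun u => - C / u) p))
    by (unfold minus, plus, opp; simpl; field; lra).
  apply (@is_RInt_derive R_CompleteNormedModule (fun u => - C / u)).
  - intros x Hx. rewrite Rmin_left in Hx by lra. auto_derive. lra. field. lra.
  - intros x Hx. rewrite Rmin_left in Hx by lra. apply cpt_c.
    apply continuity_pt_div. apply continuity_pt_const. intros a b; auto.
    apply derivable_continuous_pt. apply derivable_pt_pow. apply pow_nonzero. lra.
Qed.

Lemma tail_pos : forall f U C, (forall x, continuity_pt f x) -> 0 < U ->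
  (forall u, U <= u -> Rabs (f u) <= C / u ^ 2) ->
  forall p q, U <= p -> p <= q -> Rabs (RInt f p q) <= C / p.
Proof.
  intros f U C Hc HU Hb p q Hp Hpq.
  assert (HC : 0 <= C). { pose proof (Hb U (Rle_refl _)). pose proof (Rabs_pos (f U)).
    assert (0 < U^2) by (apply pow_lt; lra).
    destruct (Rle_or_lt 0 C); auto. assert (C / U ^ 2 < 0). apply Rdiv_neg_pos; lra. lra. }
  eapply Rle_trans. apply abs_RInt_le. auto. apply exRI; auto.
  eapply Rle_trans. apply RInt_le with (g := fun u => C / u ^ 2). auto.
  apply exRI. intro x. apply (continuity_pt_comp f Rabs). apply Hc. apply Rcontinuity_abs.
  apply (@ex_RInt_continuous R_CompleteNormedModule). intros z Hz. rewrite Rmin_left in Hz by lra. apply cpt_c.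
    apply continuity_pt_div. apply continuity_pt_const. intros a b; auto.
    apply derivable_continuous_pt. apply derivable_pt_pow. apply pow_nonzero. lra.
  intros x Hx. apply Hb. lra.
  rewrite RInt_invsq by lra. assert (0 <= C / q). apply Rdiv_le_0_compat; lra. lra.
Qed.

Lemma RInt_refl_opp : forall f a b, (forall x, continuity_pt f x) ->
  RInt f a b = RInt (fun y => - f (- y)) (- a) (- b).
Proof.
  intros f a b Hc.
  pose proof (RInt_comp_lin f (-1) 0 (-a) (-b)) as H.
  replace (-1 * - a + 0) with a in H by ring. replace (-1 * - b + 0) with b in H by ring.
  rewrite <- H by (apply exRI; auto). apply RInt_ext. intros x _. unfold scal; simpl.
  unfold mult; simpl. replace (-1 * x + 0) with (- x) by ring. ring.
Qed.

Lemma tail_neg : forall f U C, (forall x, continuity_pt f x) -> 0 < U ->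
  (forall u, u <= - U -> Rabs (f u) <= C / u ^ 2) ->
  forall p q, q <= p -> p <= - U -> Rabs (RInt f q p) <= C / (- p).
Proof.
  intros f U C Hc HU Hb p q Hqp Hp.
  rewrite RInt_refl_opp by auto.
  assert (Hc' : forall x, continuity_pt (fun y => - f (- y)) x).
  { intro x. apply continuity_pt_opp. apply (continuity_pt_comp Ropp f). apply continuity_pt_opp, continuity_pt_id. apply Hc. }
  rewrite <- opp_RInt_swap by (apply exRI; auto). unfold opp; simpl. rewrite Rabs_Ropp.
  apply (tail_pos _ U C Hc' HU); try lra.
  intros u Hu. rewrite Rabs_Ropp. replace (u ^ 2) with ((- u) ^ 2) by ring. apply Hb. lra.
Qed.

Lemma div_swap : forall K e N, 0 < e -> 0 < N -> K / e < N -> K / N < e.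
Proof.
  intros K e N He HN H.
  assert (K < N * e). { replace K with ((K / e) * e) by (field; lra). apply Rmult_lt_compat_r; lra. }
  replace e with ((N * e) / N) by (field; lra). apply Rmult_lt_compat_r. apply Rinv_0_lt_compat; lra. lra.
Qed.

Lemma improper_exists : forall f, (forall x, continuity_pt f x) ->
  (exists U C, 0 < U /\ forall u, U <= Rabs u -> Rabs (f u) <= C / u ^ 2) ->
  exists L, improper_int_R f L.
Proof.
  intros f Hc [U [C [HU Hb]]].
  assert (Hbp : forall u, U <= u -> Rabs (f u) <= C / u ^ 2).
  { intros u Hu. apply Hb. rewrite Rabs_pos_eq; lra. }
  assert (Hbn : forall u, u <= - U -> Rabs (f u) <= C / u ^ 2).
  { intros u Hu. apply Hb. rewrite Rabs_left; lra. }
  assert (HC : 0 <= C). { pose proof (Hbp U (Rle_refl _)). pose proof (Rabs_pos (f U)).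
    assert (0 < U^2) by (apply pow_lt; lra).
    destruct (Rle_or_lt 0 C); auto. assert (C / U ^ 2 < 0). apply Rdiv_neg_pos; lra. lra. }
  assert (Key : forall M a b, U <= M -> a <= - M -> M <= b ->
     Rabs (RInt f a b - RInt f (- M) M) <= 2 * C / M).
  { intros M a b HM Ha Hb'.
    rewrite <- (RInt_Chasles f a (-M) b) by (apply exRI; auto).
    rewrite <- (RInt_Chasles f (-M) M b) by (apply exRI; auto).
    unfold plus; simpl.
    replace (RInt f a (- M) + (RInt f (- M) M + RInt f M b) - RInt f (- M) M)
      with (RInt f a (- M) + RInt f M b) by ring.
    eapply Rle_trans. apply Rabs_triang.
    pose proof (tail_neg f U C Hc HU Hbn (-M) a Ha ltac:(lra)).
    pose proof (tail_pos f U C Hc HU Hbp M b HM Hb').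
    replace (- - M) with M in * by ring.
    replace (2 * C / M) with (C / M + C / M) by (field; lra). lra. }
  set (Iseq := fun n : nat => RInt f (- INR n) (INR n)).
  assert (Hcs : Cauchy_crit Iseq).
  { intros eps Heps.
    destruct (big_nat (Rmax U (4 * C / eps))) as [N HN].
    pose proof (Rmax_l U (4 * C / eps)). pose proof (Rmax_r U (4 * C / eps)).
    exists N. intros n m Hn Hm.
    apply le_INR in Hn. apply le_INR in Hm.
    assert (HN0 : 0 < INR N) by lra.
    assert (Hd : 4 * C / INR N < eps) by (apply div_swap; lra).
    unfold Rdist, Iseq.
    pose proof (Key (INR N) (- INR n) (INR n) ltac:(lra) ltac:(lra) ltac:(lra)).
    pose proof (Key (INR N) (- INR m) (INR m) ltac:(lra) ltac:(lra) ltac:(lra)).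
    replace (RInt f (- INR n) (INR n) - RInt f (- INR m) (INR m)) with
      ((RInt f (- INR n) (INR n) - RInt f (- INR N) (INR N)) - (RInt f (- INR m) (INR m) - RInt f (- INR N) (INR N))) by ring.
    eapply Rle_lt_trans. apply Rabs_triang. rewrite Rabs_Ropp.
    replace (2 * C / INR N) with (/2 * (4 * C / INR N)) in * by (field; lra). lra. }
  destruct (Rcomplete.R_complete Iseq Hcs) as [L HL].
  exists L. split.
  - intros a b _. constructor. apply ex_RInt_Reals_0, exRI; auto.
  - intros eps Heps.
    destruct (HL (eps / 2)) as [N1 HN1]. lra.
    destruct (big_nat (Rmax (Rmax U 1) (8 * C / eps))) as [N2 HN2].
    pose proof (Rmax_l (Rmax U 1) (8 * C / eps)). pose proof (Rmax_r (Rmax U 1) (8 * C / eps)).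
    pose proof (Rmax_l U 1). pose proof (Rmax_r U 1).
    set (n := (N1 + N2)%nat).
    assert (Hn1 : (n >= N1)%nat) by (unfold n; lia).
    assert (Hn2 : INR N2 <= INR n) by (apply le_INR; unfold n; lia).
    exists (INR n). split. lra.
    intros a b pr Ha Hb'.
    rewrite <- RInt_Reals.
    pose proof (Key (INR n) a b ltac:(lra) Ha Hb').
    pose proof (HN1 n Hn1) as HH1. unfold Rdist, Iseq in HH1.
    assert (Hd : 2 * C / INR n < eps / 2).
    { assert (8 * C / INR n < eps) by (apply div_swap; lra).
      replace (2 * C / INR n) with (/4 * (8 * C / INR n)) by (field; lra). lra. }
    replace (RInt f a b - L) with ((RInt f a b - RInt f (- INR n) (INR n)) + (RInt f (- INR n) (INR n) - L)) by ring.
    eapply Rle_lt_trans. apply Rabs_triang. lra.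
Qed.

Lemma c_cpt : forall f x, continuous f x -> continuity_pt f x.
Proof. intros f x H. apply continuity_pt_filterlim. exact H. Qed.

Lemma ln_cpt : forall x, 0 < x -> continuity_pt ln x.
Proof. intros x Hx. apply c_cpt, continuous_ln, Hx. Qed.

Lemma lambda_inv_le : forall y M, 0 < y -> y <= lambda M -> lambda_inv y <= M.
Proof.
  intros y M Hy H. destruct (Rle_or_lt (lambda_inv y) M) as [h|h]; auto.
  apply lambda_incr in h. rewrite lambda_inv_spec in h; lra.
Qed.

Lemma lambda_inv_ge : forall y M, 0 < y -> lambda M <= y -> M <= lambda_inv y.
Proof.
  intros y M Hy H. destruct (Rle_or_lt M (lambda_inv y)) as [h|h]; auto.
  apply lambda_incr in h. rewrite lambda_inv_spec in h; lra.
Qed.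

Section COV.
Variable a : R.
Hypothesis Ha : 0 < a.
Variables Fj Gj : R -> R.
Hypothesis Fc : forall x, continuity_pt Fj x.
Hypothesis Key : forall v, a * dlam v * Gj (a * lambda v) = Fj (- v).

Lemma Gj_eq : forall r, 0 < r ->
  Gj r = Fj (- lambda_inv (r / a)) / (a * dlam (lambda_inv (r / a))).
Proof.
  intros r Hr. assert (Hra : 0 < r / a) by (apply Rdiv_lt_0_compat; lra).
  rewrite <- Key. pose proof (dlam_pos (lambda_inv (r / a))).
  rewrite lambda_inv_spec by auto. replace (a * (r / a)) with r by (field; lra).
  field. split; lra.
Qed.

Lemma Gj_cont : forall r, 0 < r -> continuity_pt Gj r.
Proof.
  intros r Hr.
  apply continuity_pt_locally_ext with
    (f := fun r => Fj (- lambda_inv (r / a)) / (a * dlam (lambda_inv (r / a)))) (a := r).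
  auto.
  { intros y Hy. unfold Rdist in Hy. apply Rabs_def2 in Hy. symmetry. apply Gj_eq. lra. }
  assert (Hra : 0 < r / a) by (apply Rdiv_lt_0_compat; lra).
  assert (Hli : continuity_pt (fun r => lambda_inv (r / a)) r).
  { apply (continuity_pt_comp (fun r => r / a) lambda_inv).
    apply continuity_pt_div. apply continuity_pt_id. apply continuity_pt_const. intros u v; auto. lra.
    apply lambda_inv_cont. auto. }
  apply continuity_pt_div.
  - apply (continuity_pt_comp (fun r => - lambda_inv (r / a)) Fj).
    apply continuity_pt_opp. exact Hli. apply Fc.
  - apply continuity_pt_mult. apply continuity_pt_const. intros u v; auto.
    apply (continuity_pt_comp (fun r => lambda_inv (r / a)) dlam). exact Hli. apply dlam_cont.
  - pose proof (dlam_pos (lambda_inv (r / a))). apply Rgt_not_eq. apply Rmult_lt_0_compat; lra.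
Qed.

Lemma Gj_RInt : forall p q, 0 < p -> 0 < q ->
  RInt Gj p q = RInt Fj (- lambda_inv (q / a)) (- lambda_inv (p / a)).
Proof.
  intros p q Hp Hq.
  assert (Hpa : 0 < p / a) by (apply Rdiv_lt_0_compat; lra).
  assert (Hqa : 0 < q / a) by (apply Rdiv_lt_0_compat; lra).
  set (al := lambda_inv (p / a)). set (be := lambda_inv (q / a)).
  assert (Ep : a * lambda al = p) by (unfold al; rewrite lambda_inv_spec by auto; field; lra).
  assert (Eq : a * lambda be = q) by (unfold be; rewrite lambda_inv_spec by auto; field; lra).
  pose proof (RInt_comp (V := R_CompleteNormedModule) Gj (fun v => a * lambda v) (fun v => a * dlam v) al be) as H.
  simpl in H. rewrite Ep, Eq in H. rewrite <- H.
  - rewrite (RInt_refl_opp (fun y => scal (a * dlam y) (Gj (a * lambda y)))).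
    + rewrite <- opp_RInt_swap.
      * rewrite <- (RInt_opp (V := R_CompleteNormedModule)).
        -- apply RInt_ext. intros x _. unfold scal, opp; simpl. unfold mult; simpl.
           rewrite Key, !Ropp_involutive. reflexivity.
        -- apply exRI. intro x. apply (continuity_pt_ext (fun y => - Fj (- - y))).
           intro t. unfold scal; simpl; unfold mult; simpl. rewrite Key. reflexivity.
           apply continuity_pt_opp. apply (continuity_pt_comp (fun y => - - y) Fj).
           apply continuity_pt_opp, continuity_pt_opp, continuity_pt_id. apply Fc.
      * apply exRI. intro x. apply (continuity_pt_ext (fun y => - Fj (- - y))).
           intro t. unfold scal; simpl; unfold mult; simpl. rewrite Key. reflexivity.
           apply continuity_pt_opp. apply (continuity_pt_comp (fun y => - - y) Fj).
           apply continuity_pt_opp, continuity_pt_opp, continuity_pt_id. apply Fc.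
    + intro x. apply (continuity_pt_ext (fun y => Fj (- y))).
      intro t. unfold scal; simpl; unfold mult; simpl. rewrite Key. reflexivity.
      apply (continuity_pt_comp Ropp Fj). apply continuity_pt_opp, continuity_pt_id. apply Fc.
  - intros x _. apply cpt_c. apply Gj_cont. rewrite <- (Rmult_0_r a). apply Rmult_lt_compat_l; auto. apply lambda_pos.
  - intros x _. split.
    + apply is_derive_Reals. apply (derivable_pt_lim_scal lambda a x). apply is_derive_Reals, lambda_derive.
    + apply cpt_c. apply (continuity_pt_scal dlam a). apply dlam_cont.
Qed.

Lemma transfer : forall L, improper_int_R Fj L -> improper_int_pos Gj L.
Proof.
  intros L [_ HL]. split.
  - intros p q Hp Hpq. constructor. apply ex_RInt_Reals_0.
    apply (@ex_RInt_continuous R_CompleteNormedModule). intros z Hz.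
    rewrite Rmin_left in Hz by lra. apply cpt_c, Gj_cont. lra.
  - intros eps Heps. destruct (HL eps Heps) as [M [HM HM2]].
    pose proof (lambda_pos (-M)). pose proof (lambda_incr (-M) M ltac:(lra)).
    exists (a * lambda (- M)), (a * lambda M). split; [|split].
    + apply Rmult_lt_0_compat; lra.
    + apply Rmult_lt_compat_l; lra.
    + intros p q pr Hp Hpd HMq.
      assert (Hpq : p <= q). { assert (a * lambda (-M) < a * lambda M) by (apply Rmult_lt_compat_l; lra). lra. }
      rewrite <- RInt_Reals. rewrite Gj_RInt by lra.
      assert (Hpa : 0 < p / a) by (apply Rdiv_lt_0_compat; lra).
      assert (Hqa : 0 < q / a) by (apply Rdiv_lt_0_compat; lra).
      assert (lambda_inv (p / a) <= - M).
      { apply lambda_inv_le; auto. apply (Rmult_le_reg_l a); auto. replace (a * (p / a)) with p by (field; lra). lra. }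
      assert (M <= lambda_inv (q / a)).
      { apply lambda_inv_ge; auto. apply (Rmult_le_reg_l a); auto. replace (a * (q / a)) with q by (field; lra). lra. }
      assert (Hri : Riemann_integrable Fj (- lambda_inv (q / a)) (- lambda_inv (p / a))).
      { apply ex_RInt_Reals_0, exRI; auto. }
      rewrite (RInt_Reals _ _ _ Hri). apply HM2; lra.
Qed.

End COV.

Lemma sch_cont : forall g, Schwartz_R g -> forall x, continuity_pt g x.
Proof.
  intros g [D [H0 [H1 _]]] x. apply derivable_continuous_pt. exists (D 1%nat x).
  apply is_derive_Reals. apply (is_derive_ext (D 0%nat)). intro t; apply H0.
  apply is_derive_Reals, H1.
Qed.

Lemma sch_bound : forall g, Schwartz_R g -> exists B K, 0 <= B /\ 0 <= K /\
  (forall x, Rabs (g x) <= B) /\ (forall x, x <> 0 -> Rabs (g x) <= K / x ^ 2).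
Proof.
  intros g [D [H0 [_ H2]]].
  destruct (H2 0%nat 0%nat) as [B HB]. destruct (H2 2%nat 0%nat) as [K HK].
  assert (HB' : forall x, Rabs (g x) <= B). { intro x. rewrite <- H0. specialize (HB x). simpl in HB. rewrite Rmult_1_l in HB. exact HB. }
  exists B, K. split; [|split; [|split]].
  - pose proof (HB' 0); pose proof (Rabs_pos (g 0)); lra.
  - pose proof (HK 0). pose proof (Rabs_pos (0 ^ 2 * D 0%nat 0)). lra.
  - exact HB'.
  - intros x Hx. specialize (HK x). rewrite H0 in HK. rewrite Rabs_mult in HK.
    assert (Hx2 : 0 < x ^ 2) by (simpl; rewrite Rmult_1_r; apply Rsqr_pos_lt; auto).
    rewrite Rabs_pos_eq in HK by lra.
    apply (Rmult_le_reg_l (x ^ 2)); auto. unfold Rdiv. rewrite (Rmult_comm K), <- Rmult_assoc, Rinv_r by lra. lra.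
Qed.

Lemma hh_big : forall w, 1 <= w -> exp (w / 2) / 2 <= hh w.
Proof.
  intros w Hw. pose proof (u_hh w) as H.
  assert (E1 : 2 <= exp w).
  { assert (2 < exp 1) by (pose proof (exp_ineq1 1 ltac:(lra)); lra).
    destruct Hw as [Hw|Hw]. pose proof (exp_increasing 1 w Hw). lra. subst; lra. }
  assert (E2 : w <= exp (w / 2)).
  { pose proof (exp_ineq1_le (w/4)).
    replace (exp (w/2)) with (exp (w/4) * exp (w/4)) by (rewrite <- exp_plus; f_equal; field).
    assert ((1+w/4)*(1+w/4) <= exp(w/4)*exp(w/4)) by (apply Rmult_le_compat; lra).
    assert (0 <= (1 - w/4)^2) by apply pow2_ge_0.
    nra. }
  assert (E3 : exp w = exp (w/2) * exp (w/2)) by (rewrite <- exp_plus; f_equal; field).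
  pose proof (exp_pos (w/2)). pose proof (hh_pos w).
  apply (Rmult_le_reg_l w); [lra|]. rewrite H.
  apply Rle_trans with (exp (w/2) * exp (w/2) / 2). 2: lra.
  unfold Rdiv. rewrite <- Rmult_assoc. apply Rmult_le_compat_r; [lra|]. apply Rmult_le_compat_r; lra.
Qed.

Definition Ubd (a : R) : R := Rmax 1 (4 * Rabs (ln a + ln 2)).

Lemma t_bound : forall a w, 0 < a -> Ubd a <= w -> ln a - ln (hh w) <= - w / 4.
Proof.
  intros a w Ha Hw. unfold Ubd in Hw.
  pose proof (Rmax_l 1 (4 * Rabs (ln a + ln 2))). pose proof (Rmax_r 1 (4 * Rabs (ln a + ln 2))).
  assert (H1 : exp (w/2) / 2 <= hh w) by (apply hh_big; lra).
  assert (H2 : ln (exp (w/2) / 2) <= ln (hh w)).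
  { apply ln_le. apply Rdiv_lt_0_compat. apply exp_pos. lra. exact H1. }
  unfold Rdiv at 1 in H2. rewrite ln_mult in H2 by (try apply exp_pos; try apply Rinv_0_lt_compat; lra).
  rewrite ln_exp, ln_Rinv in H2 by lra.
  pose proof (Rle_abs (ln a + ln 2)). lra.
Qed.

Lemma comp_decay : forall (G g : R -> R) K a w, 0 < a -> 0 <= K ->
  (forall t, t <> 0 -> Rabs (g t) <= K / t ^ 2) ->
  (forall y, 0 < y -> G y = g (ln y)) -> Ubd a <= w ->
  Rabs (G (a * / hh w)) <= 16 * K / w ^ 2.
Proof.
  intros G g K a w Ha HK Hg HG Hw.
  pose proof (hh_pos w).
  assert (Hw1 : 1 <= w) by (unfold Ubd in Hw; pose proof (Rmax_l 1 (4 * Rabs (ln a + ln 2))); lra).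
  rewrite HG by (apply Rmult_lt_0_compat; [lra|apply Rinv_0_lt_compat; lra]).
  rewrite ln_mult, ln_Rinv by (try apply Rinv_0_lt_compat; lra).
  pose proof (t_bound a w Ha Hw) as Ht.
  set (t := ln a + - ln (hh w)) in *.
  assert (Ht' : t <= - w / 4) by (unfold t; lra).
  eapply Rle_trans. apply Hg. lra.
  assert (w ^ 2 <= 16 * t ^ 2) by nra.
  assert (0 < w ^ 2) by nra.
  assert (0 < t ^ 2) by nra.
  unfold Rdiv. apply (Rmult_le_reg_r (w ^ 2 * t ^ 2)). nra.
  replace (K * / t ^ 2 * (w ^ 2 * t ^ 2)) with (K * w ^ 2) by (field; lra).
  replace (16 * K * / w ^ 2 * (w ^ 2 * t ^ 2)) with (16 * K * t ^ 2) by (field; lra).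
  nra.
Qed.

Lemma tri : forall x y z al be, Rabs x <= al -> Rabs y <= be -> Rabs z <= 1 ->
  Rabs (x * y * z) <= al * be.
Proof.
  intros. rewrite !Rabs_mult. rewrite <- (Rmult_1_r (al * be)).
  apply Rmult_le_compat. apply Rmult_le_pos; apply Rabs_pos. apply Rabs_pos. 2: auto.
  apply Rmult_le_compat; try apply Rabs_pos; auto.
Qed.

Lemma abs4 : forall p q r s, Rabs (p + q + r + s) <= Rabs p + Rabs q + Rabs r + Rabs s.
Proof.
  intros. eapply Rle_trans. apply Rabs_triang. apply Rplus_le_compat_r.
  eapply Rle_trans. apply Rabs_triang. apply Rplus_le_compat_r. apply Rabs_triang.
Qed.

Lemma cbound : forall A B E al be,
  Rabs (fst A) <= al -> Rabs (snd A) <= al -> Rabs (fst B) <= be -> Rabs (snd B) <= be ->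
  Rabs (fst E) <= 1 -> Rabs (snd E) <= 1 ->
  Rabs (fst (Cmul (Cmul A (Cconj B)) E)) <= 4 * (al * be) /\
  Rabs (snd (Cmul (Cmul A (Cconj B)) E)) <= 4 * (al * be).
Proof.
  intros [a1 a2] [b1 b2] [e1 e2] al be H1 H2 H3 H4 H5 H6. simpl in *.
  assert (H3' : Rabs (- b1) <= be) by (rewrite Rabs_Ropp; auto).
  assert (H4' : Rabs (- b2) <= be) by (rewrite Rabs_Ropp; auto).
  split.
  - replace ((a1 * b1 - a2 * - b2) * e1 - (a1 * - b2 + a2 * b1) * e2) with
      (a1 * b1 * e1 + a2 * b2 * e1 + a1 * b2 * e2 + a2 * (- b1) * e2) by ring.
    eapply Rle_trans. apply abs4.
    pose proof (tri a1 b1 e1 al be H1 H3 H5). pose proof (tri a2 b2 e1 al be H2 H4 H5).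
    pose proof (tri a1 b2 e2 al be H1 H4 H6). pose proof (tri a2 (-b1) e2 al be H2 H3' H6). lra.
  - replace ((a1 * b1 - a2 * - b2) * e2 + (a1 * - b2 + a2 * b1) * e1) with
      (a1 * b1 * e2 + a2 * b2 * e2 + a1 * (- b2) * e1 + a2 * b1 * e1) by ring.
    eapply Rle_trans. apply abs4.
    pose proof (tri a1 b1 e2 al be H1 H3 H6). pose proof (tri a2 b2 e2 al be H2 H4 H6).
    pose proof (tri a1 (-b2) e1 al be H1 H4' H5). pose proof (tri a2 b1 e1 al be H2 H3 H5). lra.
Qed.

Definition Ccont (f : R -> Cx) (u : R) : Prop :=
  continuity_pt (fun t => fst (f t)) u /\ continuity_pt (fun t => snd (f t)) u.

Lemma Ccont_mul : forall f g u, Ccont f u -> Ccont g u -> Ccont (fun t => Cmul (f t) (g t)) u.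
Proof.
  intros f g u [F1 F2] [G1 G2]. unfold Cmul; split; simpl.
  - apply (continuity_pt_minus (fun t => fst (f t) * fst (g t)) (fun t => snd (f t) * snd (g t)));
    apply continuity_pt_mult; auto.
  - apply (continuity_pt_plus (fun t => fst (f t) * snd (g t)) (fun t => snd (f t) * fst (g t)));
    apply continuity_pt_mult; auto.
Qed.

Lemma Ccont_conj : forall f u, Ccont f u -> Ccont (fun t => Cconj (f t)) u.
Proof. intros f u [F1 F2]. split; simpl; auto. apply (continuity_pt_opp (fun t => snd (f t))); auto. Qed.

Lemma Ccont_expi : forall w u, continuity_pt w u -> Ccont (fun t => Cexpi (w t)) u.
Proof.
  intros w u H. split; simpl.
  - apply (continuity_pt_comp w cos); auto. apply continuity_cos.
  - apply (continuity_pt_comp w sin); auto. apply continuity_sin.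
Qed.

Lemma comp_cont : forall (G g w : R -> R) u, (forall x, continuity_pt g x) ->
  (forall y, 0 < y -> G y = g (ln y)) -> (forall t, 0 < w t) -> continuity_pt w u ->
  continuity_pt (fun t => G (w t)) u.
Proof.
  intros G g w u Hg HG Hw Hc.
  apply (continuity_pt_ext (fun t => g (ln (w t)))). intro t. symmetry; apply HG, Hw.
  apply (continuity_pt_comp (fun t => ln (w t)) g). 2: apply Hg.
  apply (continuity_pt_comp w ln). auto. apply ln_cpt, Hw.
Qed.

Lemma Ccont_sch : forall (psi : R -> Cx) w u, Schwartz_Rplus psi -> (forall t, 0 < w t) ->
  continuity_pt w u -> Ccont (fun t => psi (w t)) u.
Proof.
  intros psi w u [S1 S2] Hw Hc. split.
  - apply (comp_cont (fun y => fst (psi y)) (fun x => fst (psi (exp x)))); auto.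
    apply sch_cont; auto. intros y Hy. rewrite exp_ln; auto.
  - apply (comp_cont (fun y => snd (psi y)) (fun x => snd (psi (exp x)))); auto.
    apply sch_cont; auto. intros y Hy. rewrite exp_ln; auto.
Qed.

Lemma sq_pos : forall t, t <> 0 -> 0 < t ^ 2.
Proof. intros t Ht. simpl. rewrite Rmult_1_r. apply Rsqr_pos_lt; auto. Qed.

Lemma lambda_shift : forall v, lambda v * exp (- v) = lambda (- v).
Proof.
  intro v. rewrite lambda_eq, (lambda_eq2 (-v)), Ropp_involutive.
  pose proof (hh_pos v).
  assert (E : exp (-v) * exp v = 1) by (rewrite <- exp_plus; replace (-v+v) with 0 by ring; apply exp_0).
  unfold Rdiv. rewrite Rmult_comm, <- Rmult_assoc, E. ring.
Qed.

Lemma key_id : forall psi phi x a v, 0 < a ->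
  a * dlam v * fst (Cscale (/ (a * lambda v)) (Cmul (R_Aff x a psi (a * lambda v)) (Cconj (phi (a * lambda v)))))
    = fst (W_Aff_integrand psi phi x a (- v)) /\
  a * dlam v * snd (Cscale (/ (a * lambda v)) (Cmul (R_Aff x a psi (a * lambda v)) (Cconj (phi (a * lambda v)))))
    = snd (W_Aff_integrand psi phi x a (- v)).
Proof.
  intros psi phi x a v Ha.
  unfold R_Aff, W_Aff_integrand.
  replace (a * lambda v / a) with (lambda v) by (field; lra).
  rewrite lambda_inv_lambda.
  replace (a * lambda v * exp (- v)) with (a * lambda (- v)) by (rewrite <- lambda_shift; ring).
  rewrite Ropp_involutive.
  replace (- (2 * PI * x * - v)) with (2 * PI * x * v) by ring.
  pose proof (prefactor_id v) as HP. pose proof (dlam_pos v). pose proof (lambda_pos v).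
  replace (R_prefactor v) with (lambda v / dlam v) by (rewrite <- HP; field; lra).
  destruct (psi (a * lambda (- v))) as [p1 p2]. destruct (phi (a * lambda v)) as [q1 q2].
  unfold Cscale, Cmul, Cconj, Cexpi; simpl.
  split; field; lra.
Qed.

Theorem mainTheorem18 :
  forall (psi phi : R -> Cx),
    Schwartz_Rplus psi -> Schwartz_Rplus phi ->
    forall x a : R, 0 < a ->
      exists L : Cx,
        W_Aff_is psi phi x a L /\
        L2Rplus_inner_is (R_Aff x a psi) phi L.
Proof.
  intros psi phi Spsi Sphi x a Ha.
  set (F := W_Aff_integrand psi phi x a).
  assert (Fcont : forall u, Ccont F u).
  { intro u. unfold F, W_Aff_integrand.
    apply Ccont_mul. apply Ccont_mul.
    - apply (Ccont_sch psi (fun t => a * lambda t)); auto.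
      intro t; apply Rmult_lt_0_compat; [lra|apply lambda_pos].
      apply (continuity_pt_scal lambda a). apply lambda_cont.
    - apply Ccont_conj. apply (Ccont_sch phi (fun t => a * lambda (- t))); auto.
      intro t; apply Rmult_lt_0_compat; [lra|apply lambda_pos].
      apply (continuity_pt_scal (fun t => lambda (- t)) a).
      apply (continuity_pt_comp Ropp lambda). apply continuity_pt_opp, continuity_pt_id. apply lambda_cont.
    - apply Ccont_expi. apply (continuity_pt_opp (fun t => 2 * PI * x * t)).
      apply (continuity_pt_scal id (2 * PI * x)). apply continuity_pt_id. }
  destruct Spsi as [Sp1 Sp2]. destruct Sphi as [Sf1 Sf2].
  destruct (sch_bound _ Sp1) as [B1 [K1 [HB1 [HK1 [Hb1 Hk1]]]]].
  destruct (sch_bound _ Sp2) as [B2 [K2 [HB2 [HK2 [Hb2 Hk2]]]]].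
  destruct (sch_bound _ Sf1) as [B3 [K3 [HB3 [HK3 [Hb3 Hk3]]]]].
  destruct (sch_bound _ Sf2) as [B4 [K4 [HB4 [HK4 [Hb4 Hk4]]]]].
  set (B := B1 + B2 + B3 + B4). set (K := K1 + K2 + K3 + K4).
  assert (HBp : 0 <= B) by (unfold B; lra). assert (HKp : 0 <= K) by (unfold K; lra).
  assert (KB : forall (g : R -> R) Ki Bi, Ki <= K -> Bi <= B ->
    (forall t, Rabs (g t) <= Bi) -> (forall t, t <> 0 -> Rabs (g t) <= Ki / t ^ 2) ->
    (forall t, Rabs (g t) <= B) /\ (forall t, t <> 0 -> Rabs (g t) <= K / t ^ 2)).
  { intros g Ki Bi HKi HBi Hb Hk. split. intro t. eapply Rle_trans; [apply Hb|lra].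
    intros t Ht. eapply Rle_trans. apply Hk; auto. unfold Rdiv. apply Rmult_le_compat_r; auto.
    left; apply Rinv_0_lt_compat. apply sq_pos; auto. }
  destruct (KB _ K1 B1 ltac:(unfold K; lra) ltac:(unfold B; lra) Hb1 Hk1) as [c1 d1].
  destruct (KB _ K2 B2 ltac:(unfold K; lra) ltac:(unfold B; lra) Hb2 Hk2) as [c2 d2].
  destruct (KB _ K3 B3 ltac:(unfold K; lra) ltac:(unfold B; lra) Hb3 Hk3) as [c3 d3].
  destruct (KB _ K4 B4 ltac:(unfold K; lra) ltac:(unfold B; lra) Hb4 Hk4) as [c4 d4].
  clear KB Hb1 Hk1 Hb2 Hk2 Hb3 Hk3 Hb4 Hk4.
  assert (Lpos : forall t, 0 < a * lambda t) by (intro t; apply Rmult_lt_0_compat; [lra|apply lambda_pos]).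
  assert (GB : forall (G : R -> R), (forall y, 0 < y -> G y = G (exp (ln y))) -> (forall t, Rabs (G (exp t)) <= B) ->
     forall y, 0 < y -> Rabs (G y) <= B).
  { intros G HG Hb y Hy. rewrite HG; auto. }
  assert (Elog : forall (G : R -> R) y, 0 < y -> G y = G (exp (ln y))).
  { intros G y Hy. rewrite exp_ln; auto. }
  assert (Eb : forall t, Rabs (cos t) <= 1 /\ Rabs (sin t) <= 1).
  { intro t. split; apply Rabs_le; [pose proof (COS_bound t)|pose proof (SIN_bound t)]; lra. }
  assert (Decay : forall u, Ubd a <= Rabs u ->
     Rabs (fst (F u)) <= 64 * B * K / u ^ 2 /\ Rabs (snd (F u)) <= 64 * B * K / u ^ 2).
  { intros u Hu. unfold F, W_Aff_integrand.
    assert (Hu1 : u <> 0). { intro h. rewrite h, Rabs_R0 in Hu. unfold Ubd in Hu.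
      pose proof (Rmax_l 1 (4 * Rabs (ln a + ln 2))); lra. }
    assert (Hu0 : 0 < u ^ 2) by (apply sq_pos; auto).
    replace (64 * B * K / u ^ 2) with (4 * (B * (16 * K / u ^ 2))) by (field; lra).
    destruct (Rle_or_lt 0 u) as [Hp|Hn].
    - rewrite Rabs_pos_eq in Hu by lra.
      assert (E : a * lambda (- u) = a * / hh u) by (rewrite lambda_eq2, Ropp_involutive; reflexivity).
      apply cbound.
      + apply (GB (fun y => fst (psi y))); auto. intros y Hy; apply (Elog (fun y => fst (psi y))); auto.
      + apply (GB (fun y => snd (psi y))); auto. intros y Hy; apply (Elog (fun y => snd (psi y))); auto.
      + rewrite E. apply (comp_decay (fun y => fst (phi y)) (fun t => fst (phi (exp t)))); auto.
        intros; rewrite exp_ln; auto.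
      + rewrite E. apply (comp_decay (fun y => snd (phi y)) (fun t => snd (phi (exp t)))); auto.
        intros; rewrite exp_ln; auto.
      + apply Eb.
      + apply Eb.
    - rewrite Rabs_left in Hu by lra.
      assert (E : a * lambda u = a * / hh (- u)) by (rewrite lambda_eq2; reflexivity).
      replace (4 * (B * (16 * K / u ^ 2))) with (4 * ((16 * K / (- u) ^ 2) * B)) by (field; lra).
      apply cbound.
      + rewrite E. apply (comp_decay (fun y => fst (psi y)) (fun t => fst (psi (exp t)))); auto.
        intros; rewrite exp_ln; auto.
      + rewrite E. apply (comp_decay (fun y => snd (psi y)) (fun t => snd (psi (exp t)))); auto.
        intros; rewrite exp_ln; auto.
      + apply (GB (fun y => fst (phi y))); auto. intros y Hy; apply (Elog (fun y => fst (phi y))); auto.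
      + apply (GB (fun y => snd (phi y))); auto. intros y Hy; apply (Elog (fun y => snd (phi y))); auto.
      + apply Eb.
      + apply Eb. }
  assert (Ubpos : 0 < Ubd a) by (unfold Ubd; pose proof (Rmax_l 1 (4 * Rabs (ln a + ln 2))); lra).
  destruct (improper_exists (fun u => fst (F u))) as [L1 HL1].
  { intro u; apply (Fcont u). }
  { exists (Ubd a), (64 * B * K). split; auto. intros u Hu. apply (Decay u Hu). }
  destruct (improper_exists (fun u => snd (F u))) as [L2 HL2].
  { intro u; apply (Fcont u). }
  { exists (Ubd a), (64 * B * K). split; auto. intros u Hu. apply (Decay u Hu). }
  exists (L1, L2). split.
  - split; simpl; auto.
  - split; simpl.
    + apply (transfer a Ha (fun u => fst (F u))). intro u; apply (Fcont u).
      intro v. apply (key_id psi phi x a v Ha). exact HL1.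
    + apply (transfer a Ha (fun u => snd (F u))). intro u; apply (Fcont u).
      intro v. apply (key_id psi phi x a v Ha). exact HL2.
Qed.
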